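(* In the setting described in the context, Algorithm 1 run on $(\psi,\mathcal{A})$, where $\psi$ is the weighted MaxSAT instance produced by Reduction 4, terminates and returns an array $\mathrm{Ans}$ such that for every $\vec a_l\in\mathcal{A}$, $\vec a_l\in\mathrm{Cons}(Q,I,\Sigma)$ if and only if $\mathrm{Ans}[l]$ is true.
   Context: An $\mathcal{R}$-instance $I$ is a finite set of facts. A (subset) repair of $I$ w.r.t. a set $\Sigma$ of constraints is a $J\subseteq I$ with $J\models\Sigma$ maximal under inclusion among subsets of $I$ satisfying $\Sigma$; $\mathrm{Cons}(Q,I,\Sigma)=\bigcap\{Q(J):J\text{ a repair of }I\}$. Potential answers: $\mathcal{A}=Q(I)$, enumerated as $\vec a_1,\vec a_2,\dots$. Setting: either (a) $\Sigma$ is a set of primary key constraints (one per relation) on a schema $\mathcal{R}$, $Q$ is a fixed non-boolean conjunctive query, and $\phi$ is the CNF-formula of Reduction 2; or (b) $\Sigma$ is a fixed finite set of denial constraints, $Q$ is a fixed union of non-boolean conjunctive queries, and $\phi$ is the CNF form of the formula $\phi'$ of Reduction 3. In both cases $\phi$ contains a variable $p_l$ for each $\vec a_l\in\mathcal{A}$, each $p_l$ occurs in $\phi$ only as the negative literal $\neg p_l$, and $\phi$ has the property that there is a satisfying assignment of $\phi$ with $p_l=1$ iff $\vec a_l\notin\mathrm{Cons}(Q,I,\Sigma)$. (Reduction 2: variables $x_i$ per fact $f_i$; clauses $\bigvee_{f_i\in G}x_i$ for each key-equal group $G$, i.e. maximal set of facts of one relation agreeing on the key attributes; clauses $\big(\bigvee_{f_i\in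 W}\neg x_i\big)\vee\neg p_l$ for each minimal witness $W$ to $Q[\vec a_l]$, i.e. inclusion-minimal $W\subseteq I$ satisfying the boolean query obtained by substituting $\vec a_l$ for the free variables. Reduction 3: additionally uses clauses $\bigvee_{f_i\in V}\neg x_i$ for each inclusion-minimal $V\subseteq I$ violating $\Sigma$, and for each fact $f_i$ the clause $x_i\vee\bigvee_j y^i_j$ together with $y^i_j\leftrightarrow\bigwedge_{f_d\in N^i_j}x_d$, where the $N^i_j$ are the near-violations w.r.t. $f_i$: sets $S\models\Sigma$ with $S\cup\{f_i\}$ a minimal violation, or $\{f_{true}\}$ with $x_{true}=\mathrm{true}$ if $\{f_i\}$ is itself a minimal violation; in place of key-equal group clauses.) Weighted MaxSAT: hard and weighted soft clauses; an optimal solution satisfies all hard clauses and maximizes total weight of satisfied soft clauses. Reduction 4: make all clauses of $\phi$ hard, and add for each $\vec a_l\in\mathcal{A}$ a soft unit clause $(p_l)$, all of equal weight; the result is $\psi$. Algorithm 1 on input $(\psi,\mathcal{A})$: set $\mathrm{Ans}[l]=\mathrm{true}$ for all $l$ and $moreAnswers=\mathrm{true}$. While $moreAnswers$: set $moreAnswers=\mathrm{false}$; let $opt$ be an optimal solution of the current $\psi$; for each $l$ with $opt(p_l)=1$: set $moreAnswers=\mathrm{true}$, $\mathrm{Ans}[l]=\mathrm{false}$, remove the unit clause $(p_l)$ from $\psi$, remove all clauses containing the literal $\neg p_l$ from $\psi$, and add the hard unit clause $(\neg p_l)$ to $\psi$. Finally return $\mathrm{Ans}$. *)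

(* Defs.v *)
From mathcomp Require Import all_boot.
Set Implicit Arguments. Unset Strict Implicit. Unset Printing Implicit Defensive.

(* Facts of the instance range over a finite type F; an instance is a set of
   facts.  [satS J] means J |= Sigma.  [Q J t] means t \in Q(J). *)

Definition is_repair (F : finType) (satS : {set F} -> bool) (I J : {set F}) : Prop :=
  [/\ J \subset I, satS J &
      forall J' : {set F}, J \subset J' -> J' \subset I -> satS J' -> J' = J].

Definition ConsAns (F : finType) (T : Type) (satS : {set F} -> bool)
  (Q : {set F} -> T -> bool) (I : {set F}) (t : T) : Prop :=
  forall J, is_repair satS I J -> Q J t.
Arguments ConsAns {F T} satS Q I t.

Definition lit (V : finType) := (V * bool)%type.   (* (v, true) = v, (v,false) = ~v *)
Definition clause (V : finType) := seq (lit V).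
Definition cnf (V : finType) := seq (clause V).

Definition lit_true (V : finType) (s : V -> bool) (x : lit V) : bool := s x.1 == x.2.
Definition clause_true (V : finType) (s : V -> bool) (c : clause V) : bool :=
  has (lit_true s) c.
Definition cnf_true (V : finType) (s : V -> bool) (f : cnf V) : bool :=
  all (clause_true s) f.

Record maxsat (V : finType) := MaxSat {
  hard : cnf V;
  soft : seq (clause V * nat)
}.

Definition soft_weight (V : finType) (s : V -> bool) (psi : maxsat V) : nat :=
  \sum_(cw <- soft psi | clause_true s cw.1) cw.2.

Definition optimal (V : finType) (psi : maxsat V) (s : V -> bool) : Prop :=
  cnf_true s (hard psi) /\
  forall t : V -> bool, cnf_true t (hard psi) -> soft_weight t psi <= soft_weight s psi.

Definition reduction4 (V : finType) (n : nat) (p : 'I_n -> V) (phi : cnf V) (w : nat)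
  : maxsat V :=
  MaxSat phi [seq ([:: (p l, true)], w) | l <- enum 'I_n].

Definition process_l (V : finType) (n : nat) (p : 'I_n -> V)
  (st : maxsat V * ('I_n -> bool)) (l : 'I_n) : maxsat V * ('I_n -> bool) :=
  let psi := st.1 in let ans := st.2 in
  (MaxSat ([seq c <- hard psi | (p l, false) \notin c] ++ [:: [:: (p l, false)]])
          [seq cw <- soft psi | (cw.1 != [:: (p l, true)]) && ((p l, false) \notin cw.1)],
   fun k => if k == l then false else ans k).

Definition loop_body (V : finType) (n : nat) (p : 'I_n -> V)
  (psi : maxsat V) (ans : 'I_n -> bool) (opt : V -> bool)
  : maxsat V * ('I_n -> bool) :=
  foldl (process_l p) (psi, ans) [seq l <- enum 'I_n | opt (p l)].

Definition more_answers (V : finType) (n : nat) (p : 'I_n -> V) (opt : V -> bool) : bool :=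
  has (fun l => opt (p l)) (enum 'I_n).

(* [alg1_halts_with p Post psi ans]: started in state (psi, ans) with
   moreAnswers = true, Algorithm 1 terminates for EVERY possible choice of the
   optimal solutions (and an optimal solution always exists when one is
   required), and every returned array satisfies Post. *)
Inductive alg1_halts_with (V : finType) (n : nat) (p : 'I_n -> V)
  (Post : ('I_n -> bool) -> Prop) : maxsat V -> ('I_n -> bool) -> Prop :=
| alg1_step psi ans :
    (exists opt, optimal psi opt) ->
    (forall opt, optimal psi opt ->
       (more_answers p opt ->
          alg1_halts_with p Post (loop_body p psi ans opt).1 (loop_body p psi ans opt).2) /\
       (~~ more_answers p opt -> Post (loop_body p psi ans opt).2)) ->
    alg1_halts_with p Post psi ans.

(* Main.v *)
Require Import Defs.
From mathcomp Require Import all_boot.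
From mathcomp Require Import zify.
From Stdlib Require Import Classical FunctionalExtensionality.
Set Implicit Arguments. Unset Strict Implicit.

Lemma cnf_process (V : finType) (s : V -> bool) (h : cnf V) v :
  cnf_true s ([seq c <- h | (v,false) \notin c] ++ [:: [:: (v,false)]])
  = cnf_true s h && ~~ s v.
Proof.
rewrite /cnf_true all_cat /= /clause_true /= /lit_true /=.
case Hv: (s v) => /=; first by rewrite !andbF.
rewrite !andbT all_filter; apply: eq_all => c /=.
case Hc: ((v,false) \in c) => //=.
apply/esym/hasP; exists (v,false) => //. by rewrite /= Hv.
Qed.

Definition Inv (n : nat) (V : finType) (phi : cnf V) (p : 'I_n -> V) (w : nat)
  (NC : 'I_n -> Prop) (psi : maxsat V) (ans : 'I_n -> bool) : Prop :=
  [/\ soft psi = [seq ([:: (p l, true)], w) | l <- [seq l <- enum 'I_n | ans l]],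
      forall s, cnf_true s (hard psi) <-> cnf_true s phi /\ (forall l, ans l = false -> s (p l) = false)
    & forall l, ans l = false -> NC l].

Lemma process_inv (n : nat) (V : finType) (phi : cnf V) (p : 'I_n -> V) (w : nat) (NC : 'I_n -> Prop) (p_inj : injective p) (st : maxsat V * ('I_n -> bool)) (l : 'I_n) :
  Inv phi p w NC st.1 st.2 -> NC l ->
  Inv phi p w NC (process_l p st l).1 (process_l p st l).2 /\
  forall k, (process_l p st l).2 k = st.2 k && (k != l).
Proof.
case: st => psi ans /= [H1 H2 H3] Hl; split; last first.
  by move=> k; case: eqP => _; rewrite ?andbT ?andbF.
split => /=.
- rewrite H1 filter_map -filter_predI; congr map; apply: eq_filter => k /=.
  rewrite in_cons in_nil orbF /=.
  have -> : ((p l, false) != (p k, true)) by rewrite xpair_eqE andbF.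
  case: (eqVneq k l) => [->|nkl]; first by rewrite eqxx.
  case: (ans k); rewrite ?andbF ?andbT //.
  apply/negP => /eqP [] /p_inj E; by rewrite E eqxx in nkl.
- move=> s; rewrite cnf_process; split.
  + move/andP=> [/H2 [Hp Ha] Hs]; split=> // k; case: ifP => [/eqP -> _|_ /Ha //].
    by apply/negbTE.
  + move=> [Hp Ha]; apply/andP; split.
      apply/H2; split=> // k Hk; apply: Ha; by rewrite Hk; case: ifP.
    by rewrite Ha // eqxx.
- move=> k; case: ifP => [/eqP -> //|_]; exact: H3.
Qed.

Lemma fold_inv (n : nat) (V : finType) (phi : cnf V) (p : 'I_n -> V) (w : nat) (NC : 'I_n -> Prop) (p_inj : injective p) (ls : seq 'I_n) :
  forall st : maxsat V * ('I_n -> bool), Inv phi p w NC st.1 st.2 -> (forall l, l \in ls -> NC l) ->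
  Inv phi p w NC (foldl (process_l p) st ls).1 (foldl (process_l p) st ls).2 /\
  forall k, (foldl (process_l p) st ls).2 k = st.2 k && (k \notin ls).
Proof.
elim: ls => [|l ls IH] st Hst Hls /=; first by split=> // k; rewrite andbT.
have [Hi Hk] := process_inv p_inj Hst (Hls l (mem_head _ _)).
have [Hi' Hk'] := IH _ Hi (fun l' Hl' => Hls l' (mem_behead (s:=l::ls) Hl')).
split=> // k; rewrite Hk' Hk in_cons negb_or andbA; congr andb; by rewrite eq_sym.
Qed.
Lemma exists_opt (V : finType) (psi : maxsat V) :
  (exists s, cnf_true s (hard psi)) -> exists opt, optimal psi opt.
Proof.
move=> [s0 Hs0].
have E : forall t : V -> bool, (fun x => [ffun x => t x] x) = t.
  by move=> t; apply: functional_extensionality => x; rewrite ffunE.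
pose P := fun f : {ffun V -> bool} => cnf_true (fun x => f x) (hard psi).
have P0 : P [ffun x => s0 x] by rewrite /P E.
case: (arg_maxnP (fun f : {ffun V -> bool} => soft_weight (fun x => f x) psi) P0)
  => f Pf Hmax.
exists (fun x => f x); split=> // t Ht.
have := Hmax [ffun x => t x]; rewrite /P E; exact.
Qed.

Lemma lower (V : finType) (phi : cnf V) (n : nat) (p : 'I_n -> V)
  (p_neg_only : forall c, c \in phi -> forall l, (p l, true) \notin c)
  (s s' : V -> bool) :
  cnf_true s phi -> (forall v, s' v = s v \/ (s' v = false /\ exists l, p l = v)) ->
  cnf_true s' phi.
Proof.
move=> Hs Hv; apply/allP => c Hc.
case/hasP: (allP Hs c Hc) => [[v b] xc xt]; apply/hasP; exists (v,b) => //.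
move: xt; rewrite /lit_true /=.
case: (Hv v) => [-> //|[-> [l pl]]] _.
case: b xc => // xc; have := p_neg_only c Hc l; by rewrite pl xc.
Qed.

Lemma count_split (T : Type) (a b : pred T) (s : seq T) :
  (forall x, a x -> b x) -> count a s + count (fun x => b x && ~~ a x) s = count b s.
Proof.
move=> Hab; elim: s => //= x s IH; rewrite -IH.
case Ha: (a x); first by rewrite (Hab _ Ha) /= !add0n ?addnA ?add1n; lia.
case: (b x) => /=; lia.
Qed.
Lemma sw_eq (n : nat) (V : finType) (p : 'I_n -> V) (w : nat) (psi : maxsat V)
  (ans : 'I_n -> bool) (s : V -> bool) :
  soft psi = [seq ([:: (p l, true)], w) | l <- [seq l <- enum 'I_n | ans l]] ->
  soft_weight s psi = w * count (fun k => ans k && s (p k)) (enum 'I_n).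
Proof.
move=> H; rewrite /soft_weight H big_map big_filter_cond /=.
rewrite (eq_bigl (fun k => ans k && s (p k))); last first.
  by move=> k /=; rewrite /clause_true /lit_true /= orbF eqb_id.
by rewrite big_const_seq iter_addn_0.
Qed.
Theorem proposition4
  (F : finType) (satS : {set F} -> bool) (T : eqType) (Q : {set F} -> T -> bool)
  (I : {set F})
  (n : nat) (a : 'I_n -> T)
  (a_inj : injective a)
  (a_enum : forall t, Q I t <-> exists l, a l = t)
  (V : finType) (phi : cnf V) (p : 'I_n -> V)
  (p_inj : injective p)
  (p_neg_only : forall c, c \in phi -> forall l, (p l, true) \notin c)
  (phi_sat : exists s : V -> bool, cnf_true s phi)
  (phi_char : forall l,
      (exists s : V -> bool, cnf_true s phi /\ s (p l) = true) <-> ~ ConsAns satS Q I (a l))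
  (w : nat) (w_pos : 0 < w) :
  alg1_halts_with p
    (fun Ans => forall l : 'I_n, ConsAns satS Q I (a l) <-> Ans l = true)
    (reduction4 p phi w) (fun _ => true).
Proof.
pose NC := fun l => ~ ConsAns satS Q I (a l).
have satmod : forall ans : 'I_n -> bool, exists s, cnf_true s phi /\
    forall l, ans l = false -> s (p l) = false.
  move=> ans; case: phi_sat => s0 H0.
  exists (fun v => if [exists l, p l == v] then false else s0 v); split.
    apply: (lower p_neg_only H0) => v.
    case: ifP => [/existsP [l /eqP pl]|_]; [right; split=>//; by exists l | by left].
  move=> l _; have -> // : [exists l', p l' == p l] by apply/existsP; exists l.
suff main : forall m psi ans, count ans (enum 'I_n) = m ->
    Inv phi p w NC psi ans ->
    alg1_halts_with p
      (fun Ans => forall l : 'I_n, ConsAns satS Q I (a l) <-> Ans l = true) psi ans.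
  apply: (main _ _ _ erefl); split => //=.
  - by congr map; apply/esym/all_filterP; apply/allP.
  - by move=> s; split=> [H|[]] //; split.
elim/ltn_ind => m IH psi ans Hm Hinv.
have [H1 H2 H3] := Hinv.
constructor.
  apply: exists_opt; case: (satmod ans) => s [Hs Ha]; exists s; by apply/H2.
move=> opt [Hopt Hmax].
have [Hphi Hans] := (H2 opt).1 Hopt.
set ls := [seq l <- enum 'I_n | opt (p l)].
have Hls : forall l, l \in ls -> NC l.
  move=> l; rewrite mem_filter => /andP [Hl _]; apply/phi_char; exists opt; split=> //.
have [Hi Hk] := @fold_inv n V phi p w NC p_inj ls (psi, ans) Hinv Hls.
split.
- move=> Hmore; rewrite /loop_body -/ls.
  apply: (IH (count (foldl (process_l p) (psi, ans) ls).2 (enum 'I_n))) => //.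
  case/hasP: Hmore => l _ Hl.
  have Hal : ans l = true by case Hal: (ans l) => //; rewrite Hans in Hl.
  rewrite -Hm -(@count_split _ (foldl (process_l p) (psi, ans) ls).2 ans (enum 'I_n)); last by move=> x; rewrite Hk /= => /andP [].
  rewrite -[X in X < _]addn0 ltn_add2l -has_count; apply/hasP; exists l; first exact: mem_enum.
  by rewrite Hk /= Hal /= mem_filter Hl mem_enum.
- move=> Hno.
  have Els : ls = [::] by move: Hno; rewrite /more_answers has_filter negbK => /eqP.
  rewrite /loop_body -/ls Els /= => l; split.
    by move=> Hc; case Hal: (ans l) => //; have := H3 l Hal.
  move=> Hal; apply: NNPP => Hnc; case/phi_char: Hnc => s [Hs Hsl].
  pose s2 := fun v => if [exists k, (p k == v) && ~~ ans k] then false else s v.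
  have Hs2 : cnf_true s2 (hard psi).
    apply/H2; split.
      apply: (lower p_neg_only Hs) => v; rewrite /s2.
      case: ifP => [/existsP [k /andP [/eqP pk _]]|_]; [right; split=>//; by exists k | by left].
    move=> k Hk0; rewrite /s2.
    have -> // : [exists k', (p k' == p k) && ~~ ans k'] by apply/existsP; exists k; rewrite eqxx Hk0.
  have := Hmax _ Hs2; rewrite !(sw_eq _ H1).
  have -> : count (fun k => ans k && opt (p k)) (enum 'I_n) = 0.
    apply/eqP; rewrite -leqn0 leqNgt -has_count; apply/hasP => [[k _ /andP [_ Hk1]]].
    by apply: (negP Hno); apply/hasP; exists k => //; exact: mem_enum.
  have Hc : 0 < count (fun k => ans k && s2 (p k)) (enum 'I_n).
    rewrite -has_count; apply/hasP; exists l; first exact: mem_enum.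
    rewrite Hal /= /s2; case: ifP => [/existsP [k /andP [/eqP pk nk]]|_]; last exact Hsl.
    by move: nk; rewrite (p_inj _ _ pk) Hal.
  rewrite muln0 leqn0 muln_eq0 => /orP [/eqP Hw|/eqP Hc0]; first by rewrite Hw in w_pos.
  by rewrite Hc0 in Hc.
Qed.
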